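(* Let $\varphi$ be a strongly convex function and let $\mu$ be a positive finite Borel measure on $\mathbb{D}$. Then $\|B(\mu)\|_{(L^\varphi)^*}<\infty$ if and only if $\int_{\mathbb{D}}h\,d\mu<\infty$ for every $h\in\operatorname{Har}^+_\varphi$. Moreover, $$\|B(\mu)\|_{(L^\varphi)^*}=\sup\Big\{\int_{\mathbb{D}}h\,d\mu:\ h=P[w]\in\operatorname{Har}^+_\varphi,\ \|w\|_\varphi\le1\Big\}.$$
   Context: A function $\varphi:\mathbb{R}\to[0,\infty)$ is strongly convex if it is convex, nondecreasing, $\lim_{t\to\infty}\varphi(t)/t=\infty$, and there are $M,K\ge0$, $t_0\in\mathbb{R}$ with $\varphi(t+2)\le M\varphi(t)+K$ for $t\ge t_0$. $L^\varphi(\mathbb{T})$ is the Orlicz space of measurable $u$ with $\varphi\circ|u|\in L^1(m)$ ($m$ normalized Lebesgue measure on $\mathbb{T}$); $\varphi$ is modified on some $[0,t_0]$ to a convex function on $[0,\infty)$ vanishing at $0$, $L^\varphi$ carries the norm $\|u\|_\varphi=\inf\{t>0:\int\varphi(|u|/t)dm\le t\}$, and $(L^\varphi)^*$ is the dual with dual norm. $P[w](z)=\int_{\mathbb{T}}P_z(\zeta)w(\zeta)dm(\zeta)$ with $P_z(\zeta)=\frac{1-|z|^2}{|\zeta-z|^2}$; $\operatorname{Har}^+_\varphi=\{P[w]:0\le w\in L^\varphi\}$. The Poisson balayage is $B(\mu)(\zeta)=\int_{\mathbb{D}}P_z(\zeta)\,d\mu(z)$. *)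

(* Defs.v *)
From HB Require Import structures.
From mathcomp Require Import all_boot all_order all_algebra.
From mathcomp Require Import all_classical all_reals all_analysis.
Set Implicit Arguments. Unset Strict Implicit. Unset Printing Implicit Defensive.
Import Order.TTheory GRing.Theory Num.Theory.
Import numFieldNormedType.Exports.
Local Open Scope classical_set_scope.
Local Open Scope ring_scope.

Section Orlicz.
Variable R : realType.

Definition strongly_convex (phi : R -> R) : Prop :=
  (forall t, 0 <= phi t) /\
  (forall x y l, 0 <= l <= 1 -> phi (l * x + (1 - l) * y) <= l * phi x + (1 - l) * phi y) /\
  (forall x y, x <= y -> phi x <= phi y) /\
  (forall A, exists B, forall t, B < t -> A < phi t / t) /\
  (exists M K t0, 0 <= M /\ 0 <= K /\ forall t, t0 <= t -> phi (t + 2) <= M * phi t + K).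

Definition modification (phi psi : R -> R) : Prop :=
  psi 0 = 0 /\
  (forall t, 0 <= t -> 0 <= psi t) /\
  (forall x y l, 0 <= x -> 0 <= y -> 0 <= l <= 1 ->
      psi (l * x + (1 - l) * y) <= l * psi x + (1 - l) * psi y) /\
  (exists t1, 0 <= t1 /\ forall t, t1 <= t -> psi t = phi t).

(** The circle T parametrized by theta in [0, 2 pi]; m = normalized Lebesgue measure. *)
Definition circ : set R := `[0, 2 * pi]%classic.

Definition mint (f : R -> \bar R) : \bar R :=
  ((2 * pi)^-1)%:E * (\int[@lebesgue_measure R]_(x in circ) f x)%E.

Definition Lphi (phi : R -> R) (u : R -> R) : Prop :=
  measurable_fun circ u /\ (mint (fun x => (phi `|u x|)%:E) < +oo)%E.

Definition orlicz_norm (psi : R -> R) (u : R -> R) : R :=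
  inf [set t : R | 0 < t /\ (mint (fun x => (psi (`|u x| / t))%:E) <= t%:E)%E].

Definition dual_norm (phi psi : R -> R) (g : R -> \bar R) : \bar R :=
  ereal_sup [set mint (fun x => `|(g x * (u x)%:E)%E|%E) |
             u in [set u | Lphi phi u /\ orlicz_norm psi u <= 1]].

Definition disc : set (R * R) := [set z | z.1 ^+ 2 + z.2 ^+ 2 < 1].

Definition poisson (z : R * R) (theta : R) : R :=
  (1 - (z.1 ^+ 2 + z.2 ^+ 2)) /
  ((cos theta - z.1) ^+ 2 + (sin theta - z.2) ^+ 2).

Definition Pint (w : R -> R) (z : R * R) : \bar R :=
  mint (fun theta => (poisson z theta * w theta)%:E).

Definition balayage (mu : set (R * R) -> \bar R) (theta : R) : \bar R :=
  (\int[mu]_(z in disc) (poisson z theta)%:E)%E.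

End Orlicz.
Arguments disc {R}.
Arguments circ {R}.

(* Main.v *)
Require Import Defs.
From HB Require Import structures.
From mathcomp Require Import all_boot all_order all_algebra.
From mathcomp Require Import all_classical all_reals all_analysis.
From mathcomp Require Import measurable_realfun ring lra.
Import Order.TTheory GRing.Theory Num.Theory.
Import numFieldNormedType.Exports.
Local Open Scope classical_set_scope.
Local Open Scope ring_scope.

Section Meas.
Context (R : realType).

Lemma mcirc : measurable (circ : set R).
Proof. exact: measurable_itv. Qed.

Lemma minv : measurable_fun [set: R] (@GRing.inv R).
Proof.
have -> : [set: R] = [set x : R | x != 0] `|` [set 0].
  apply/seteqP; split => x //= _; have [->|x0] := eqVneq x 0; [by right|by left].
apply/measurable_funU => //.
  by apply: open_measurable; exact: open_neq.
split; last exact: measurable_fun_set1.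
apply: open_continuous_measurable_fun; first exact: open_neq.
move=> x /set_mem /= x0; exact: inv_continuous.
Qed.

Lemma mdisc : measurable (disc : set (R * R)).
Proof.
have mf : measurable_fun [set: R * R] (fun z : R * R => z.1 ^+ 2 + z.2 ^+ 2).
  apply: measurable_funD; apply: measurable_funX.
    exact: measurable_fst.
  exact: measurable_snd.
have := mf measurableT `]-oo, 1[%classic (measurable_itv _).
rewrite setTI; congr measurable; apply/seteqP; split => z /=;
  by rewrite /disc /= in_itv /=.
Qed.

Lemma mpoisson : measurable_fun [set: (R * R) * R]
  (fun p : (R * R) * R => poisson p.1 p.2).
Proof.
rewrite /poisson.
have m11 : measurable_fun [set: (R * R) * R] (fun p : (R * R) * R => p.1.1).
  exact: measurableT_comp measurable_fst measurable_fst.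
have m12 : measurable_fun [set: (R * R) * R] (fun p : (R * R) * R => p.1.2).
  exact: measurableT_comp measurable_snd measurable_fst.
have m2 : measurable_fun [set: (R * R) * R] (fun p : (R * R) * R => p.2).
  exact: measurable_snd.
have mc : measurable_fun [set: (R * R) * R] (fun p : (R * R) * R => cos p.2).
  apply: measurableT_comp m2; by apply: continuous_measurable_fun; exact: continuous_cos.
have ms : measurable_fun [set: (R * R) * R] (fun p : (R * R) * R => sin p.2).
  apply: measurableT_comp m2; by apply: continuous_measurable_fun; exact: continuous_sin.
apply: measurable_funM.
  apply: measurable_funB => //.
  by apply: measurable_funD; apply: measurable_funX.
apply: measurableT_comp; first exact: minv.
by apply: measurable_funD; apply: measurable_funX; apply: measurable_funB.
Qed.

Lemma poisson_ge0 (z : R * R) (t : R) : disc z -> 0 <= poisson z t.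
Proof.
rewrite /disc /poisson /= => z1.
apply: divr_ge0; first by rewrite subr_ge0 ltW.
by apply: addr_ge0; apply: sqr_ge0.
Qed.

End Meas.

Section Big.
Context (R : realType) (mu : {finite_measure set (R * R)%type -> \bar R}).
Context (phi psi : R -> R).
Hypothesis hphi : strongly_convex phi.
Hypothesis hpsi : modification phi psi.
Local Notation leb := (@lebesgue_measure R).

Definition Gb (t : R) : \bar R :=
  (\int[mu]_z (\1_disc z * poisson z t)%:E)%E.

Lemma mdiscP : measurable_fun [set: (R * R) * R]
   (fun p : (R * R) * R => (\1_disc p.1 * poisson p.1 p.2) : R).
Proof.
apply: measurable_funM; last exact: mpoisson.
apply: measurableT_comp measurable_fst.
exact: measurable_indic (mdisc R).
Qed.

Lemma discP_ge0 (z : R * R) (t : R) : 0 <= \1_disc z * poisson z t.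
Proof.
rewrite indicE; have [/set_mem dz|nz] := boolP (z \in disc).
  by rewrite mul1r poisson_ge0.
by rewrite mul0r.
Qed.

Lemma balayageE t : balayage mu t = Gb t.
Proof.
rewrite /balayage /Gb integral_mkcond; apply: eq_integral => z _.
rewrite patchE indicE; case: ifPn => _; first by rewrite mul1r.
by rewrite mul0r.
Qed.

Lemma mGb : measurable_fun [set: R] Gb.
Proof.
apply: (@measurable_fun_fubini_tonelli_G _ _ _ _ _ mu
  (fun p : (R * R) * R => (\1_disc p.1 * poisson p.1 p.2)%:E)).
  by apply/measurable_EFinP; exact: mdiscP.
by move=> p; rewrite lee_fin discP_ge0.
Qed.

Lemma Gb_ge0 t : (0 <= Gb t)%E.
Proof. by apply: integral_ge0 => z _; rewrite lee_fin discP_ge0. Qed.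


Lemma Fub (w : R -> R) : (forall x, 0 <= w x) -> measurable_fun circ w ->
  (\int[mu]_(z in disc) Pint w z)%E = mint (fun t => (w t)%:E * balayage mu t)%E.
Proof.
move=> w0 mw.
have c0 : 0 <= (2 * pi)^-1 :> R by rewrite invr_ge0 mulr_ge0 // pi_ge0.
set c := (2 * pi)^-1 : R.
set wc := w \_ circ.
have mwc : measurable_fun setT wc := (measurable_restrictT w (mcirc R)).1 mw.
have wc0 x : 0 <= wc x by rewrite /wc patchE; case: ifP.
pose F := fun p : (R * R) * R => (c * (\1_disc p.1 * poisson p.1 p.2 * wc p.2))%:E.
have mF : measurable_fun setT F.
  apply/measurable_EFinP; apply: measurable_funM; first exact: measurable_cst.
  apply: measurable_funM; first exact: mdiscP.
  exact: measurableT_comp mwc measurable_snd.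
have F0 p : (0 <= F p)%E.
  by rewrite lee_fin mulr_ge0 // mulr_ge0 // discP_ge0.
have := @fubini_tonelli _ _ _ _ _ mu leb F mF F0.
have -> : (\int[mu]_(z in disc) Pint w z = \int[mu]_x \int[leb]_y F (x, y))%E.
  rewrite integral_mkcond; apply: eq_integral => z _; rewrite patchE.
  case: ifPn => [/set_mem zd|zd].
    rewrite /Pint /mint -/c.
    transitivity (\int[leb]_y (c%:E * (poisson z y * wc y)%:E))%E; last first.
      apply: eq_integral => y _; rewrite /F /= indicE.
      by rewrite mem_set // mul1r EFinM.
    rewrite ge0_integralZl_EFin //; last first.
      apply/measurable_EFinP; apply: measurable_funM => //.
      exact: measurable_fun_pair2 (mpoisson R).
      by move=> y _; rewrite lee_fin mulr_ge0 // poisson_ge0.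
    congr (_ * _)%E; rewrite [LHS]integral_mkcond; apply: eq_integral => y _.
    by rewrite /wc !patchE; case: ifPn => _ //; rewrite mulr0.
  apply/esym/integral0_eq => y _; rewrite /F /= indicE.
  by rewrite (negbTE zd) mul0r mul0r mulr0.
move=> ->.
rewrite /mint -/c.
transitivity (\int[leb]_y (c%:E * ((wc y)%:E * Gb y)))%E.
  apply: eq_integral => y _.
  transitivity (\int[mu]_x ((c * wc y)%:E * (\1_disc x * poisson x y)%:E))%E.
    by apply: eq_integral => x _; rewrite /F /= -EFinM; congr EFin; ring.
  have h1 : forall x, [set: R * R] x -> (0 <= (\1_disc x * poisson x y)%:E)%E.
    by move=> x _; rewrite lee_fin discP_ge0.
  have h2 : measurable_fun setT (fun x : R * R => (\1_disc x * poisson x y)%:E).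
    apply/measurable_EFinP; exact: measurable_fun_pair1 (mdiscP).
  rewrite (ge0_integralZl_EFin mu measurableT h1 h2 (mulr_ge0 c0 (wc0 y))).
  by rewrite EFinM muleA.
have h1 : forall y, [set: R] y -> (0 <= (wc y)%:E * Gb y)%E.
  by move=> y _; rewrite mule_ge0 // ?lee_fin // Gb_ge0.
have h2 : measurable_fun setT (fun y : R => (wc y)%:E * Gb y)%E.
  apply: emeasurable_funM; [exact/measurable_EFinP | exact: mGb].
rewrite (ge0_integralZl_EFin leb measurableT h1 h2 c0).
congr (_ * _)%E; apply/esym; rewrite [LHS]integral_mkcond; apply: eq_integral => y _.
rewrite patchE /wc patchE; case: ifPn => _; first by rewrite balayageE.
by rewrite mul0e.
Qed.

Lemma pi2_gt0 : 0 < 2 * pi :> R.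
Proof. by rewrite mulr_gt0 // pi_gt0. Qed.

Lemma leb_circ : leb (circ : set R) = (2 * pi)%:E.
Proof.
rewrite /circ lebesgue_measure_itv /= lte_fin pi2_gt0 /=.
by rewrite oppr0 adde0.
Qed.

Lemma mint_ge0 (f : R -> \bar R) : (forall x, circ x -> (0 <= f x)%E) -> (0 <= mint f)%E.
Proof.
move=> f0; rewrite /mint mule_ge0 //; first by rewrite lee_fin invr_ge0 ltW // pi2_gt0.
exact: integral_ge0.
Qed.

Lemma mint_le (f g : R -> \bar R) : (forall x, circ x -> (0 <= f x)%E) ->
  measurable_fun circ f -> measurable_fun circ g ->
  (forall x, circ x -> (f x <= g x)%E) -> (mint f <= mint g)%E.
Proof.
move=> f0 mf mg fg; rewrite /mint lee_wpmul2l //.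
  by rewrite lee_fin invr_ge0 ltW // pi2_gt0.
by apply: ge0_le_integral => //; exact: mcirc.
Qed.

Lemma mintZ (k : R) (f : R -> \bar R) : 0 <= k -> (forall x, circ x -> (0 <= f x)%E) ->
  measurable_fun circ f -> mint (fun x => k%:E * f x)%E = (k%:E * mint f)%E.
Proof.
move=> k0 f0 mf; rewrite /mint (ge0_integralZl_EFin leb (mcirc R) f0 mf k0).
by rewrite muleCA.
Qed.

Lemma mintD (f g : R -> \bar R) : (forall x, circ x -> (0 <= f x)%E) ->
  measurable_fun circ f -> (forall x, circ x -> (0 <= g x)%E) -> measurable_fun circ g ->
  mint (fun x => f x + g x)%E = (mint f + mint g)%E.
Proof.
move=> f0 mf g0 mg; rewrite /mint (ge0_integralD leb (mcirc R) f0 mf g0 mg).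
rewrite ge0_muleDr //.
  exact: integral_ge0.
exact: integral_ge0.
Qed.

Lemma mint_cst (k : R) : mint (fun _ => k%:E) = k%:E.
Proof.
rewrite /mint (integral_cst leb (mcirc R) k%:E).
rewrite [X in (_ * (_ * X))%E](_ : _ = (2 * pi)%:E); last exact: leb_circ.
rewrite -!EFinM.
congr EFin; have := pi2_gt0; set p := 2 * pi => p0.
by rewrite mulrCA mulVf ?mulr1 // gt_eqF.
Qed.

Lemma phi_ge0 x : 0 <= phi x.
Proof. by case: hphi => h _; exact: h. Qed.

Lemma phi_mono x y : x <= y -> phi x <= phi y.
Proof. by case: hphi => _ [_ [h _]]; exact: h. Qed.

Lemma psi0 : psi 0 = 0.
Proof. by case: hpsi. Qed.

Lemma psi_ge0 x : 0 <= x -> 0 <= psi x.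
Proof. by case: hpsi => _ [h _]; exact: h. Qed.

Lemma psi_scale s x : 0 <= s <= 1 -> 0 <= x -> psi (s * x) <= s * psi x.
Proof.
case: hpsi => p0 [_ [hc _]] hs x0.
have := hc x 0 s x0 (lexx 0) hs; rewrite mulr0 addr0 p0 mulr0 addr0; exact.
Qed.

Lemma psi_mono x y : 0 <= x -> x <= y -> psi x <= psi y.
Proof.
move=> x0 xy; have [y0|y0] := eqVneq y 0.
  by have -> : x = y by apply/le_anti; rewrite xy /= y0 x0.
have yp : 0 < y by rewrite lt_neqAle eq_sym y0 (le_trans x0 xy).
have -> : x = (x / y) * y by rewrite divfK.
have hs : 0 <= x / y <= 1.
  by apply/andP; split; [rewrite divr_ge0 // ltW | rewrite ler_pdivrMr // mul1r].
apply: le_trans; first exact: (psi_scale _ _ hs (ltW yp)).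
have /andP[_ hs1] := hs; by rewrite ler_piMl // psi_ge0 // ltW.
Qed.

Definition t1psi : R := projT1 (cid (let: conj _ (conj _ (conj _ h)) := hpsi in h)).

Lemma t1psiP : 0 <= t1psi /\ forall t, t1psi <= t -> psi t = phi t.
Proof. rewrite /t1psi; case: cid => //. Qed.

Lemma psi_le_phi x : 0 <= x -> psi x <= phi x + phi t1psi.
Proof.
move=> x0; have [t0 ht] := t1psiP.
have [tx|xt] := leP t1psi x.
  by rewrite ht // lerDl phi_ge0.
apply: (le_trans (psi_mono _ _ x0 (ltW xt))); rewrite ht //.
by rewrite lerDr phi_ge0.
Qed.

Lemma phi_le_psi x : 0 <= x -> phi x <= psi x + phi t1psi.
Proof.
move=> x0; have [t0 ht] := t1psiP.
have [tx|xt] := leP t1psi x.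
  by rewrite ht // lerDl phi_ge0.
apply: (le_trans (phi_mono _ _ (ltW xt))).
by rewrite lerDr psi_ge0.
Qed.

Lemma id_le_psi : exists C, 0 <= C /\ forall x, 0 <= x -> x <= psi x + C.
Proof.
have [t0 ht] := t1psiP.
case: hphi => _ [_ [_ [hs _]]].
have [B0 hB] := hs 1.
pose T0 := Num.max (Num.max B0 t1psi) 0 + 1.
have T0p : 0 < T0 by rewrite /T0 ltr_wpDl // le_max lexx orbT.
exists T0; split; first exact: ltW.
move=> x x0; have [xT|Tx] := leP T0 x.
  have xp : 0 < x by apply: lt_le_trans xT.
  have Bx : B0 < x.
    apply: lt_le_trans xT; rewrite /T0 ltr_pwDr // le_max.
    by rewrite le_max lexx.
  have tx : t1psi <= x.
    apply: le_trans (ltW (lt_le_trans _ xT)) => //; rewrite /T0 ltr_pwDr //.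
    by rewrite le_max le_max lexx orbT.
  have := hB x Bx; rewrite ltr_pdivlMr // mul1r => /ltW h.
  by rewrite ht // ler_wpDr // ltW.
by have := psi_ge0 x x0; lra.
Qed.

Definition psim (x : R) := psi (Num.max x 0).

Lemma mpsim : measurable_fun setT psim.
Proof.
apply: nondecreasing_measurable => // x y xy.
apply: psi_mono; first by rewrite le_max lexx orbT.
by rewrite ge_max le_max xy /= le_max lexx orbT.
Qed.

Lemma mphi : measurable_fun setT phi.
Proof. by apply: nondecreasing_measurable => // x y; exact: phi_mono. Qed.

Lemma mpsi_comp (D : set R) (f : R -> R) : (forall x, 0 <= f x) ->
  measurable_fun D f -> measurable_fun D (fun x => (psi (f x))%:E).
Proof.
move=> f0 mf; apply/measurable_EFinP.
have -> : (fun x => psi (f x)) = psim \o f.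
  by apply/funext => x /=; rewrite /psim max_l.
apply: measurableT_comp => //; exact: mpsim.
Qed.

Lemma mphi_comp (D : set R) (f : R -> R) :
  measurable_fun D f -> measurable_fun D (fun x => (phi (f x))%:E).
Proof.
move=> mf; apply/measurable_EFinP.
apply: (measurableT_comp (f := phi)) => //; exact: mphi.
Qed.

Lemma mnorm_comp (D : set R) (f : R -> R) :
  measurable_fun D f -> measurable_fun D (fun x => `|f x|).
Proof. by move=> mf; apply: measurableT_comp => //; exact: normr_measurable. Qed.

Lemma nb_bound u : Lphi phi u -> exists K, 0 <= K /\ forall c, 1 <= c ->
  (mint (fun x => (psi (`|u x| / c))%:E) <= (K / c)%:E)%E.
Proof.
case=> mu_ fin.
set A := mint (fun x => (phi `|u x|)%:E).
have A0 : (0 <= A)%E by apply: mint_ge0 => x _; rewrite lee_fin phi_ge0.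
have Afin : A \is a fin_num by rewrite ge0_fin_numE.
have t0 := t1psiP.1.
exists (fine A + phi t1psi); split.
  by rewrite addr_ge0 ?phi_ge0 // fine_ge0.
move=> c c1; have c0 : 0 < c by apply: lt_le_trans c1.
have ci0 : 0 <= c^-1 by rewrite invr_ge0 ltW.
have mphiu := mphi_comp _ _ (mnorm_comp _ _ mu_).
apply: (@le_trans _ _ (mint (fun x => (c^-1%:E * ((phi `|u x|)%:E + (phi t1psi)%:E))))%E).
  apply: mint_le.
  - by move=> x _; rewrite lee_fin psi_ge0 // divr_ge0 // ltW.
  - apply: mpsi_comp; first by move=> x; rewrite divr_ge0 // ltW.
    by apply: measurable_funM => //; exact: mnorm_comp.
  - apply: emeasurable_funM; first exact: measurable_cst.
    by apply: emeasurable_funD => //; exact: measurable_cst.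
  - move=> x _; rewrite -EFinD -EFinM lee_fin mulrC.
    apply: le_trans (psi_scale _ _ _ _) _.
    + by rewrite ci0 /= invr_le1 // ?unitfE ?gt_eqF.
    + by [].
    by rewrite ler_wpM2l // psi_le_phi.
rewrite mintZ //; last 2 first.
  by move=> x _; rewrite adde_ge0 // lee_fin phi_ge0.
  by apply: emeasurable_funD => //; exact: measurable_cst.
rewrite mintD; [|by move=> x _; rewrite lee_fin phi_ge0|exact: mphiu
  |by move=> x _; rewrite lee_fin phi_ge0|exact: measurable_cst].
rewrite mint_cst -/A -(fineK Afin) -EFinD -EFinM lee_fin mulrC.
by [].
Qed.

Lemma nb_set u : Lphi phi u -> exists c, 1 <= c /\
  (mint (fun x => (psi (`|u x| / c))%:E) <= 1%:E)%E.
Proof.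
move=> /nb_bound[K [K0 hK]].
exists (Num.max 1 K); split; first by rewrite le_max lexx.
apply: le_trans (hK _ _) _; first by rewrite le_max lexx.
have c0 : 0 < Num.max 1 K by rewrite lt_max ltr01.
by rewrite lee_fin ler_pdivrMr // mul1r le_max lexx orbT.
Qed.

Lemma nb_le1 u : Lphi phi u -> exists c, 1 <= c /\
  orlicz_norm psi (fun x => u x / c) <= 1.
Proof.
move=> /nb_set[c [c1 hc]]; exists c; split => //.
have c0 : 0 < c by apply: lt_le_trans c1.
rewrite /orlicz_norm; apply: ge_inf.
  by exists 0 => t [/ltW].
split; first exact: ltr01.
apply: le_trans hc; rewrite le_eqVlt; apply/orP; left; apply/eqP.
congr mint; apply/funext => x; rewrite divr1 normrM normfV (gtr0_norm c0).
by [].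
Qed.

Lemma orlicz_lt2 u : Lphi phi u -> orlicz_norm psi u <= 1 ->
  (mint (fun x => (psi (`|u x| / 2))%:E) <= 2%:E)%E.
Proof.
move=> Lu; have [mu_ _] := Lu; move: Lu => /nb_set[c [c1 hc]] nu.
set S := [set t : R | 0 < t /\ (mint (fun x => (psi (`|u x| / t))%:E) <= t%:E)%E].
have Sc : S c.
  split; first by apply: lt_le_trans c1.
  by apply: le_trans hc _; rewrite lee_fin.
have [t [t0 ht] t2] : exists2 t, S t & t < 2.
  apply: inf_lt; first by exists c.
  by apply: le_lt_trans nu _; rewrite ltr1n.
have h2 : (t%:E <= 2%:E)%E by rewrite lee_fin ltW.
apply: le_trans (le_trans ht h2).
apply: mint_le.
- by move=> x _; rewrite lee_fin psi_ge0 // divr_ge0.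
- by apply: mpsi_comp; [move=> x; rewrite divr_ge0 | apply: measurable_funM => //; exact: mnorm_comp].
- by apply: mpsi_comp; [move=> x; rewrite divr_ge0 // ltW | apply: measurable_funM => //; exact: mnorm_comp].
move=> x _; rewrite lee_fin; apply: psi_mono; first by rewrite divr_ge0.
by rewrite ler_wpM2l // lef_pV2 // ?ltW // posrE.
Qed.

Lemma B_ge0 t : (0 <= balayage mu t)%E.
Proof. by rewrite balayageE Gb_ge0. Qed.

Lemma mB : measurable_fun circ (balayage mu).
Proof.
have -> : balayage mu = Gb by apply/funext => t; rewrite balayageE.
exact: measurable_funTS mGb.
Qed.

Lemma mwB (w : R -> R) : measurable_fun circ w ->
  measurable_fun circ (fun t => (w t)%:E * balayage mu t)%E.
Proof. by move=> mw; apply: emeasurable_funM; [exact/measurable_EFinP | exact: mB]. Qed.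

Lemma wB_ge0 (w : R -> R) : (forall x, 0 <= w x) ->
  forall t, circ t -> (0 <= (w t)%:E * balayage mu t)%E.
Proof. by move=> w0 t _; rewrite mule_ge0 ?lee_fin ?B_ge0. Qed.

Definition Wset := [set w : R -> R | (forall x, 0 <= w x) /\ Lphi phi w /\
                                      orlicz_norm psi w <= 1].

Lemma orlicz_abs (u : R -> R) : orlicz_norm psi (fun x => `|u x|) = orlicz_norm psi u.
Proof.
rewrite /orlicz_norm; congr inf; apply/funext => t /=.
by under eq_fun do rewrite normr_id.
Qed.

Lemma Lphi_abs (u : R -> R) : Lphi phi u -> Lphi phi (fun x => `|u x|).
Proof.
case=> mu_ fu; split; first exact: mnorm_comp.
by under eq_fun do rewrite normr_id.
Qed.

Lemma dual_eq : dual_norm phi psi (balayage mu) =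
  ereal_sup [set (\int[mu]_(z in disc) Pint w z)%E | w in Wset].
Proof.
rewrite /dual_norm; congr ereal_sup; apply/seteqP; split => _ [w [Lw nw] <-].
  exists (fun x => `|w x|).
    split; first by move=> x.
    by split; [exact: Lphi_abs | rewrite orlicz_abs].
  rewrite Fub //; last by case: Lw => mw _; exact: mnorm_comp.
  congr mint; apply/funext => x.
  by rewrite abseM (gee0_abs (B_ge0 x)) abse_EFin muleC.
case: nw => Lw2 nw2; exists w; first by split.
rewrite Fub //; last by case: Lw2.
congr mint; apply/funext => x.
by rewrite abseM (gee0_abs (B_ge0 x)) abse_EFin muleC ger0_norm.
Qed.

Lemma forward : (dual_norm phi psi (balayage mu) < +oo)%E ->
  forall w : R -> R, (forall x, 0 <= w x) -> Lphi phi w ->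
    (\int[mu]_(z in disc) Pint w z < +oo)%E.
Proof.
rewrite dual_eq => hS w w0 Lw.
have [mw fw] := Lw.
have [c [c1 nc]] := nb_le1 _ Lw.
have c0 : 0 < c by apply: lt_le_trans c1.
pose wc := fun x => w x / c.
have mwc : measurable_fun circ wc by apply: measurable_funM.
have wc0 x : 0 <= wc x by rewrite /wc divr_ge0 // ltW.
have Wwc : Wset wc.
  split => //; split => //; split => //.
  apply: le_lt_trans fw; apply: mint_le.
  - by move=> x _; rewrite lee_fin phi_ge0.
  - by apply: mphi_comp; apply: mnorm_comp.
  - by apply: mphi_comp; apply: mnorm_comp.
  move=> x _; rewrite lee_fin; apply: phi_mono.
  rewrite /wc normrM normfV (gtr0_norm c0) ler_pdivrMr // ler_peMr //.
have hle : (\int[mu]_(z in disc) Pint wc z <= ereal_sup [set (\int[mu]_(z in disc) Pint w z)%E | w in Wset])%E.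
  by apply: ereal_sup_ubound; exists wc.
set X := (\int[mu]_(z in disc) Pint wc z)%E in hle.
have X0 : (0 <= X)%E by rewrite /X Fub //; apply: mint_ge0; exact: wB_ge0.
have Xfin : X \is a fin_num by rewrite ge0_fin_numE // (le_lt_trans hle hS).
have -> : (\int[mu]_(z in disc) Pint w z = c%:E * X)%E.
  rewrite /X !Fub // -mintZ //; last 2 first.
    exact: wB_ge0.
    exact: mwB.
  congr mint; apply/funext => t.
  by rewrite muleA -EFinM /wc mulrC divfK // gt_eqF.
  exact: ltW.
by rewrite -(fineK Xfin) -EFinM ltry.
Qed.
Lemma int_mint (f : R -> \bar R) :
  (\int[leb]_(x in circ) f x = (2 * pi)%:E * mint f)%E.
Proof.
by rewrite /mint muleA -EFinM mulfV ?mul1e // gt_eqF // pi2_gt0.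
Qed.

Lemma mint_lty (f : R -> \bar R) : (forall x, circ x -> (0 <= f x)%E) ->
  (\int[leb]_(x in circ) f x < +oo)%E -> (mint f < +oo)%E.
Proof.
move=> f0 h.
have i0 : (0 <= \int[leb]_(x in circ) f x)%E by exact: integral_ge0.
have fin : (\int[leb]_(x in circ) f x)%E \is a fin_num by rewrite ge0_fin_numE.
by rewrite /mint -(fineK fin) -EFinM ltry.
Qed.

Lemma mint_ae_le (f g : R -> \bar R) : (forall x, circ x -> (0 <= f x)%E) ->
  measurable_fun circ f -> (forall x, circ x -> (0 <= g x)%E) -> measurable_fun circ g ->
  {ae leb, forall t, circ t -> (f t <= g t)%E} -> (mint f <= mint g)%E.
Proof.
move=> f0 mf g0 mg hae; rewrite /mint lee_wpmul2l //.
  by rewrite lee_fin invr_ge0 ltW // pi2_gt0.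
by apply: ae_ge0_le_integral => //; exact: mcirc.
Qed.

Lemma ser_ge (g : nat -> \bar R) : (forall k, (0 <= g k)%E) ->
  forall n, (g n <= \sum_(k <oo) g k)%E.
Proof.
move=> g0 n.
have h : (\sum_(0 <= i < n.+1) g i <= \sum_(i <oo) g i)%E.
  exact: (@nneseries_lim_ge R g xpredT 0 n.+1 (fun k _ _ => g0 k)).
apply: le_trans h; rewrite big_nat_recr //=; apply: leeDr.
by apply: sume_ge0 => k _; exact: g0.
Qed.

Definition aa (k : nat) : R := ((2 ^ (k + 1))%:R)^-1.

Lemma aa_gt0 k : 0 < aa k.
Proof. by rewrite /aa invr_gt0 ltr0n expn_gt0. Qed.

Lemma aa_le1 k : aa k <= 1.
Proof.
rewrite /aa invr_le1 ?unitfE ?pnatr_eq0 -?lt0n ?expn_gt0 //.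
by rewrite ler1n expn_gt0.
Qed.

Lemma geo_sum (D : R) : (\sum_(k <oo) (D * aa k)%:E = D%:E)%E.
Proof.
have h := @cvg_geometric_eseries_half R D 0.
rewrite expr0 divr1 in h.
by apply: cvg_lim => //; exact: h.
Qed.

Lemma series_bound (g : nat -> R -> \bar R) (D : R) :
  (forall k, measurable_fun circ (g k)) -> (forall k t, circ t -> (0 <= g k t)%E) ->
  (forall k, \int[leb]_(t in circ) g k t <= (D * aa k)%:E)%E ->
  (\int[leb]_(t in circ) (\sum_(k <oo) g k t) <= D%:E)%E.
Proof.
move=> mg g0 hg.
rewrite integral_nneseries //; last exact: mcirc.
rewrite -geo_sum.
apply: (@lee_nneseries R _ (fun k => (D * aa k)%:E) xpredT 0) => //.
by move=> k _ _; apply: integral_ge0 => t; exact: g0.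
Qed.
Lemma backward :
  (forall w : R -> R, (forall x, 0 <= w x) -> Lphi phi w ->
     (\int[mu]_(z in disc) Pint w z < +oo)%E) ->
  (dual_norm phi psi (balayage mu) < +oo)%E.
Proof.
move=> Hw; rewrite dual_eq ltey; apply/negP => /eqP HS.
pose J := fun w : R -> R => mint (fun t => (w t)%:E * balayage mu t)%E.
pose T := fun k : nat => k%:R * 4 * (2 ^ (k + 1))%:R : R.
have hex : forall k : nat, exists u, Wset u /\ ((T k)%:E < J u)%E.
  move=> k.
  have : ((T k)%:E < ereal_sup [set (\int[mu]_(z in disc) Pint w z)%E | w in Wset])%E.
    by rewrite HS ltry.
  move=> /ereal_sup_gt[_ [u Wu <-] hlt]; exists u; split => //.
  have [u0 [[mu_ _] _]] := Wu.
  by rewrite /J -Fub.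
have [u hu] := choice hex.
have u0 k t : 0 <= u k t by have [[h _] _] := hu k; exact: h.
have Lu k : Lphi phi (u k) by have [[_ [h _]] _] := hu k.
have nu k : orlicz_norm psi (u k) <= 1 by have [[_ [_ h]] _] := hu k.
have mu_ k : measurable_fun circ (u k) by have [h _] := Lu k.
have Ju k : ((T k)%:E < J (u k))%E by have [_ h] := hu k.
pose x := fun k t => u k t / 2.
have x0 k t : 0 <= x k t by rewrite /x divr_ge0.
have mx k : measurable_fun circ (x k) by apply: measurable_funM.
have psix k : (mint (fun t => (psi (x k t))%:E) <= 2%:E)%E.
  have -> : (fun t => (psi (x k t))%:E) = (fun t => (psi (`|u k t| / 2))%:E).
    by apply/funext => t; rewrite ger0_norm.
  exact: orlicz_lt2.
pose f := fun k t => (aa k * x k t)%:E.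
have f0 k t : (0 <= f k t)%E by rewrite lee_fin mulr_ge0 // ltW // aa_gt0.
have mf k : measurable_fun circ (f k) by apply/measurable_EFinP; apply: measurable_funM.
pose M := fun t => esups (fun k => f k t) 0.
have mM : measurable_fun circ M by apply: measurable_fun_esups.
have fM k t : (f k t <= M t)%E by rewrite /M /esups /=; apply: ereal_sup_ubound; exists k.
have M0 t : (0 <= M t)%E := le_trans (f0 0%N t) (fM 0%N t).
pose V := fun t => (\sum_(k <oo) f k t)%E.
have mV : measurable_fun circ V.
  exact: (ge0_emeasurable_sum (D := circ) (h := f) (P := xpredT) (fun k t _ _ => f0 k t) (fun k _ => mf k)).
have MV t : (M t <= V t)%E.
  rewrite /M /esups /=; apply: ge_ereal_sup => _ [k _ <-].
  exact: (ser_ge (fun k => f k t) (fun k => f0 k t) k).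
have [C [C0 hC]] := id_le_psi.
have intV : (\int[leb]_(t in circ) V t <= (2 * pi * (2 + C))%:E)%E.
  apply: series_bound => //.
  move=> k; rewrite int_mint.
  have E : mint (f k) = ((aa k)%:E * mint (fun t => (x k t)%:E))%E.
    rewrite -mintZ; first by congr mint; apply/funext => t; rewrite EFinM.
    - exact: ltW (aa_gt0 k).
    - by move=> t _; rewrite lee_fin.
    - exact/measurable_EFinP.
  rewrite E.
  have hx : (mint (fun t => (x k t)%:E) <= (2 + C)%:E)%E.
    apply: (@le_trans _ _ (mint (fun t => (psi (x k t))%:E + C%:E))%E).
      apply: mint_le.
      - by move=> t _; rewrite lee_fin.
      - exact/measurable_EFinP.
      - by apply: emeasurable_funD; [exact: mpsi_comp | exact: measurable_cst].
      by move=> t _; rewrite -EFinD lee_fin hC.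
    rewrite mintD.
    - by rewrite mint_cst EFinD leeD2r.
    - by move=> t _; rewrite lee_fin psi_ge0.
    - exact: mpsi_comp.
    - by move=> t _; rewrite lee_fin.
    - exact: measurable_cst.
  apply: (@le_trans _ _ ((2 * pi)%:E * ((aa k)%:E * (2 + C)%:E))%E).
    apply: lee_wpmul2l; first by rewrite lee_fin ltW // pi2_gt0.
    by apply: lee_wpmul2l => //; rewrite lee_fin ltW // aa_gt0.
  by rewrite -!EFinM lee_fin le_eqVlt; apply/orP; left; apply/eqP; ring.
have Mint : leb.-integrable circ M.
  apply/integrableP; split => //.
  apply: (@le_lt_trans _ _ (\int[leb]_(t in circ) V t)%E); last first.
    by apply: le_lt_trans intV _; exact: ltry.
  apply: ge0_le_integral.
  - exact: mcirc.
  - by move=> t _; exact: abse_ge0.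
  - by apply: (measurableT_comp (f := abse) (g := M)) => //; exact: abse_measurable.
  - exact: mV.
  - by move=> t _; rewrite gee0_abs.
have mC : measurable (circ : set (measurableTypeR R)) by exact: mcirc.
have aeM := integrable_ae mC Mint.
pose w := fun t => fine (M t) / 2.
have w0 t : 0 <= w t by rewrite /w divr_ge0 // fine_ge0.
have mw : measurable_fun circ w.
  apply: measurable_funM => //; apply: measurableT_comp => //.
pose g := fun k t => (aa k * psi (x k t))%:E.
have g0 k t : (0 <= g k t)%E by rewrite lee_fin mulr_ge0 ?psi_ge0 // ltW // aa_gt0.
have mg k : measurable_fun circ (g k).
  apply/measurable_EFinP; apply: measurable_funM => //.
  by apply/measurable_EFinP; exact: mpsi_comp.
pose Vp := fun t => (\sum_(k <oo) g k t)%E.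
have mVp : measurable_fun circ Vp.
  exact: (ge0_emeasurable_sum (D := circ) (h := g) (P := xpredT) (fun k t _ _ => g0 k t) (fun k _ => mg k)).
have intVp : (\int[leb]_(t in circ) Vp t <= (2 * pi * 2)%:E)%E.
  apply: series_bound => //.
  move=> k; rewrite int_mint.
  have E : mint (g k) = ((aa k)%:E * mint (fun t => (psi (x k t))%:E))%E.
    rewrite -mintZ; first by congr mint; apply/funext => t; rewrite EFinM.
    - exact: ltW (aa_gt0 k).
    - by move=> t _; rewrite lee_fin psi_ge0.
    - exact: mpsi_comp.
  rewrite E.
  apply: (@le_trans _ _ ((2 * pi)%:E * ((aa k)%:E * 2%:E))%E).
    apply: lee_wpmul2l; first by rewrite lee_fin ltW // pi2_gt0.
    by apply: lee_wpmul2l => //; rewrite lee_fin ltW // aa_gt0.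
  by rewrite -!EFinM lee_fin le_eqVlt; apply/orP; left; apply/eqP; ring.
have psiw t : ((psi (w t))%:E <= Vp t)%E.
  have [wz|wnz] := eqVneq (w t) 0.
    rewrite wz psi0; apply: le_trans (g0 0%N t) _.
    exact: (ser_ge (fun k => g k t) (fun k => g0 k t) 0%N).
  have Mfin : M t \is a fin_num.
    by move: wnz; rewrite /w; case: (M t) => //=; rewrite mul0r eqxx.
  have wlt : ((w t)%:E < M t)%E.
    rewrite -(fineK Mfin) lte_fin /w.
    have m0 : 0 <= fine (M t) by rewrite fine_ge0.
    have mn0 : fine (M t) != 0 by move: wnz; rewrite /w; apply: contra => /eqP ->; rewrite mul0r.
    have mp : 0 < fine (M t) by rewrite lt_neqAle eq_sym mn0 m0.
    by rewrite ltr_pdivrMr // ltr_pMr // ltr1n.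
  move: wlt; rewrite /M /esups /= => /ereal_sup_gt[_ [k _ <-] hk].
  apply: le_trans (ser_ge (fun k => g k t) (fun k => g0 k t) k).
  rewrite /g lee_fin; apply: le_trans (psi_scale _ _ _ (x0 k t)).
    apply: psi_mono; first exact: w0.
    by move: hk; rewrite /f lte_fin => /ltW.
  by rewrite (ltW (aa_gt0 k)) aa_le1.
have Lw : Lphi phi w.
  split => //.
  have -> : (fun x => (phi `|w x|)%:E) = (fun x => (phi (w x))%:E).
    by apply/funext => t; rewrite ger0_norm.
  apply: (@le_lt_trans _ _ (mint (fun t => (psi (w t))%:E + (phi t1psi)%:E))%E).
    apply: mint_le.
    - by move=> t _; rewrite lee_fin phi_ge0.
    - exact: mphi_comp.
    - by apply: emeasurable_funD; [exact: mpsi_comp | exact: measurable_cst].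
    by move=> t _; rewrite -EFinD lee_fin phi_le_psi.
  rewrite mintD.
  - rewrite mint_cst; apply: lte_add_pinfty; last exact: ltry.
    apply: (@le_lt_trans _ _ (mint Vp)).
      apply: mint_le.
      - by move=> t _; rewrite lee_fin psi_ge0.
      - exact: mpsi_comp.
      - exact: mVp.
      - by move=> t _; exact: psiw.
    apply: mint_lty; first by move=> t _; apply: le_trans (g0 0%N t) _; exact: (ser_ge (fun k => g k t) (fun k => g0 k t) 0%N).
    by apply: le_lt_trans intVp _; exact: ltry.
  - by move=> t _; rewrite lee_fin psi_ge0.
  - exact: mpsi_comp.
  - by move=> t _; rewrite lee_fin phi_ge0.
  - exact: measurable_cst.
have Jw k : ((k%:R)%:E < J w)%E.
  have p0 : (2 ^ (k + 1))%:R != 0 :> R by rewrite pnatr_eq0 -lt0n expn_gt0.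
  have ak : 0 < aa k / 4 by rewrite divr_gt0 // aa_gt0.
  apply: (@lt_le_trans _ _ ((aa k / 4)%:E * J (u k))%E).
    have -> : (k%:R = (aa k / 4) * T k) by rewrite /T /aa; field.
    by rewrite EFinM lte_pmul2l.
  rewrite /J -mintZ; last 3 first.
  - exact: ltW.
  - exact: wB_ge0.
  - exact: mwB.
  apply: mint_ae_le.
  - by move=> t ct; apply: mule_ge0; [rewrite lee_fin ltW | exact: wB_ge0].
  - by apply: emeasurable_funM; [exact: measurable_cst | exact: mwB].
  - exact: wB_ge0.
  - exact: mwB.
  apply: filterS aeM => t h ct.
  have Mfin := h ct.
  rewrite muleA -EFinM; apply: lee_wpmul2r; first exact: B_ge0.
  have := fM k t; rewrite -(fineK Mfin) /f lee_fin /x => hle.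
  rewrite lee_fin /w.
  have -> : aa k / 4 * u k t = (aa k * (u k t / 2)) / 2 by field.
  by rewrite ler_wpM2r // invr_ge0.
have Jfin : (J w < +oo)%E by rewrite /J -Fub //; exact: Hw.
have J0 : (0 <= J w)%E by apply: mint_ge0; exact: wB_ge0.
have Jf : J w \is a fin_num by rewrite ge0_fin_numE.
have := Jw (Num.truncn (fine (J w))).+1.
rewrite -(fineK Jf) lte_fin => h1.
have := truncnS_gt (fine (J w)).
by rewrite ltNge (ltW h1).
Qed.

End Big.

Theorem proposition5p1 (R : realType) (phi psi : R -> R)
  (mu : {finite_measure set (R * R)%type -> \bar R}) :
  strongly_convex phi -> modification phi psi ->
  ((dual_norm phi psi (balayage mu) < +oo)%E <->
     (forall w : R -> R, (forall x, 0 <= w x) -> Lphi phi w ->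
        (\int[mu]_(z in disc) Pint w z < +oo)%E)) /\
  dual_norm phi psi (balayage mu) =
    ereal_sup [set (\int[mu]_(z in disc) Pint w z)%E |
               w in [set w : R -> R | (forall x, 0 <= w x) /\ Lphi phi w /\
                                      orlicz_norm psi w <= 1]].
Proof.
move=> hphi hpsi; split; first split.
- by apply: forward.
- by apply: backward.
- by apply: dual_eq.
Qed.
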